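(* Suppose $(X_A,\sigma_A)$ and $(X_B,\sigma_B)$ are continuously orbit equivalent via a homeomorphism $h:X_A\to X_B$ with continuous $k_1,l_1:X_A\to\mathbb Z_+$ and $k_2,l_2:X_B\to\mathbb Z_+$ as in the context. Then for all $m\in\mathbb Z_+$, $f\in C(X_B,\mathbb Z)$ and $g\in C(X_A,\mathbb Z)$: (i) for all $x\in X_A$, $\Psi_h(f)^m(x)=f^{l_1^m(x)}(h(x))-f^{k_1^m(x)}(h(\sigma_A^m(x)))$, and $g^m(x)=\Psi_{h^{-1}}(g)^{l_1^m(x)}(h(x))-\Psi_{h^{-1}}(g)^{k_1^m(x)}(h(\sigma_A^m(x)))$; (ii) for all $y\in X_B$, $\Psi_{h^{-1}}(g)^m(y)=g^{l_2^m(y)}(h^{-1}(y))-g^{k_2^m(y)}(h^{-1}(\sigma_B^m(y)))$, and $f^m(y)=\Psi_h(f)^{l_2^m(y)}(h^{-1}(y))-\Psi_h(f)^{k_2^m(y)}(h^{-1}(\sigma_B^m(y)))$.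
   Context: Let $N,M>1$ and let $A$ ($N\times N$), $B$ ($M\times M$) be irreducible $\{0,1\}$-matrices which are not permutation matrices. $X_A$ is the compact space of sequences $(x_n)_{n\in\mathbb N}$ with $x_n\in\{1,\dots,N\}$, $A(x_n,x_{n+1})=1$, and $\sigma_A((x_n)_n)=(x_{n+1})_n$; similarly $(X_B,\sigma_B)$. $\mathbb Z_+$ denotes the nonnegative integers. For a function $u$ on $X_A$ (resp. $X_B$) and $n\in\mathbb Z_+$, $u^n(x)=\sum_{i=0}^{n-1}u(\sigma_A^i(x))$ (resp. with $\sigma_B$), so $u^0=0$. Continuous orbit equivalence via $h$: $h:X_A\to X_B$ is a homeomorphism and $k_1,l_1:X_A\to\mathbb Z_+$, $k_2,l_2:X_B\to\mathbb Z_+$ are continuous with $\sigma_B^{k_1(x)}(h(\sigma_A(x)))=\sigma_B^{l_1(x)}(h(x))$ for all $x\in X_A$ and $\sigma_A^{k_2(y)}(h^{-1}(\sigma_B(y)))=\sigma_A^{l_2(y)}(h^{-1}(y))$ for all $y\in X_B$. Define $\Psi_h:C(X_B,\mathbb Z)\to C(X_A,\mathbb Z)$ by $\Psi_h(f)(x)=\sum_{i=0}^{l_1(x)-1}f(\sigma_B^i(h(x)))-\sum_{j=0}^{k_1(x)-1}f(\sigma_B^j(h(\sigma_A(x))))$, and $\Psi_{h^{-1}}:C(X_A,\mathbb Z)\to C(X_B,\mathbb Z)$ by $\Psi_{h^{-1}}(g)(y)=\sum_{i=0}^{l_2(y)-1}g(\sigma_A^i(h^{-1}(y)))-\sum_{j=0}^{k_2(y)-1}g(\sigma_A^j(h^{-1}(\sigma_B(y))))$.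 Here $l_1^m,k_1^m$ (resp. $l_2^m,k_2^m$) are the Birkhoff sums of $l_1,k_1$ over $\sigma_A$ (resp. of $l_2,k_2$ over $\sigma_B$). *)

(* Defs.v *)
From mathcomp Require Import all_boot all_order all_algebra all_fingroup.
Set Implicit Arguments. Unset Strict Implicit. Unset Printing Implicit Defensive.
Import GRing.Theory Num.Theory.
Local Open Scope ring_scope.

Definition zero_one_mx (N : nat) (A : 'M[int]_N) : Prop :=
  forall i j, A i j = 0 \/ A i j = 1.

Definition irreducible_mx (N : nat) (A : 'M[int]_N) : Prop :=
  forall i j : 'I_N, exists n : nat, (0 < n)%N /\ 0 < (A ^+ n) i j.

Definition in_XA (N : nat) (A : 'M[int]_N) (x : nat -> 'I_N) : Prop :=
  forall n, A (x n) (x n.+1) = 1.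

Definition XA (N : nat) (A : 'M[int]_N) := {x : nat -> 'I_N | in_XA A x}.

Lemma in_XA_shift (N : nat) (A : 'M[int]_N) (x : XA A) :
  in_XA A (fun n => proj1_sig x n.+1).
Proof. by move=> n; exact: (proj2_sig x n.+1). Qed.

Definition shiftA (N : nat) (A : 'M[int]_N) (x : XA A) : XA A :=
  exist _ (fun n => proj1_sig x n.+1) (in_XA_shift x).

Definition agree (N : nat) (A : 'M[int]_N) (n : nat) (x x' : XA A) : Prop :=
  forall i, (i < n)%N -> proj1_sig x i = proj1_sig x' i.

(* continuity (product topology) of a map between shift spaces *)
Definition cont_map (N M : nat) (A : 'M[int]_N) (B : 'M[int]_M)
  (h : XA A -> XA B) : Prop :=
  forall (x : XA A) (m : nat), exists n : nat,
    forall x' : XA A, agree n x x' -> agree m (h x) (h x').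

(* continuity of a map into a discrete space (Z, Z_+) *)
Definition cont_disc (N : nat) (A : 'M[int]_N) (T : Type) (F : XA A -> T) : Prop :=
  forall x : XA A, exists n : nat, forall x' : XA A, agree n x x' -> F x' = F x.

Definition birk (T : Type) (sigma : T -> T) (u : T -> int) (n : nat) (x : T) : int :=
  \sum_(i < n) u (iter i sigma x).
Definition birkn (T : Type) (sigma : T -> T) (u : T -> nat) (n : nat) (x : T) : nat :=
  (\sum_(i < n) u (iter i sigma x))%N.

Definition Psi (S T : Type) (sS : S -> S) (sT : T -> T) (h : S -> T)
  (k l : S -> nat) (f : T -> int) (x : S) : int :=
  birk sT f (l x) (h x) - birk sT f (k x) (h (sS x)).

(* Main.v *)
Require Import Defs.
From mathcomp Require Import all_boot all_order all_algebra all_fingroup.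
From mathcomp Require Import zify.
Import Order.TTheory GRing.Theory Num.Theory.
Local Open Scope ring_scope.


Section Alg.
Variables (S T : Type) (sS : S -> S) (sT : T -> T).

Lemma iterC (U : Type) (f : U -> U) a b z : iter a f (iter b f z) = iter b f (iter a f z).
Proof. by rewrite -!iterD addnC. Qed.

Lemma birkD (U : Type) (sU : U -> U) u a b z :
  birk sU u (a + b)%N z = birk sU u a z + birk sU u b (iter a sU z).
Proof.
rewrite /birk big_split_ord /=; f_equal; apply: eq_bigr => i _.
by rewrite /= addnC iterD.
Qed.

Lemma birknD (U : Type) (sU : U -> U) u a b z :
  birkn sU u (a + b) z = (birkn sU u a z + birkn sU u b (iter a sU z))%N.
Proof.
rewrite /birkn big_split_ord /=; f_equal; apply: eq_bigr => i _.
by rewrite /= addnC iterD.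
Qed.

Lemma birknS (U : Type) (sU : U -> U) u m z :
  birkn sU u m.+1 z = (birkn sU u m z + u (iter m sU z))%N.
Proof. by rewrite /birkn big_ord_recr. Qed.

Lemma birkS (U : Type) (sU : U -> U) u m z :
  birk sU u m.+1 z = birk sU u m z + u (iter m sU z).
Proof. by rewrite /birk big_ord_recr. Qed.

Lemma birk1 (U : Type) (sU : U -> U) u z : birk sU u 1 z = u z.
Proof. by rewrite /birk big_ord1. Qed.

Variables (h : S -> T) (k l : S -> nat).
Hypothesis E : forall x, iter (k x) sT (h (sS x)) = iter (l x) sT (h x).

Lemma cocycle m x :
  iter (birkn sS l m x) sT (h x) = iter (birkn sS k m x) sT (h (iter m sS x)).
Proof.
elim: m => [|m IH]; first by rewrite /birkn !big_ord0.
rewrite !birknS /= addnC iterD IH iterC -E -iterD addnC iterD //.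
Qed.

Lemma PsiSum f m x :
  birk sS (Psi sS sT h k l f) m x =
  birk sT f (birkn sS l m x) (h x) - birk sT f (birkn sS k m x) (h (iter m sS x)).
Proof.
elim: m => [|m IH]; first by rewrite /birk /birkn !big_ord0 subrr.
rewrite birkS IH !birknS /Psi /=.
set y := iter m sS x.
set L := birkn sS l m x; set K := birkn sS k m x.
rewrite birkD (cocycle m x) -/L -/K -/y.
rewrite (addnC K) birkD E.
have H1 : birk sT f K (h y) + birk sT f (l y) (iter K sT (h y)) =
          birk sT f (l y) (h y) + birk sT f K (iter (l y) sT (h y)).
  by rewrite -!birkD addnC.
lia.
Qed.

End Alg.

Section Inv.
Variables (S T : Type) (sS : S -> S) (sT : T -> T).
Variables (h : S -> T) (k l : S -> nat).
Hypothesis E : forall x, iter (k x) sT (h (sS x)) = iter (l x) sT (h x).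
Variables (hinv : T -> S) (k' l' : T -> nat).
Hypothesis E' : forall y, iter (k' y) sS (hinv (sT y)) = iter (l' y) sS (hinv y).
Hypothesis hK : cancel h hinv.

Lemma PsiInv g x :
  (birkn sT l' (l x) (h x) + birkn sT k' (k x) (h (sS x)) =
   birkn sT k' (l x) (h x) + 1 + birkn sT l' (k x) (h (sS x)))%N ->
  Psi sS sT h k l (Psi sT sS hinv k' l' g) x = g x.
Proof.
move=> Hc; rewrite /Psi (@PsiSum _ _ _ _ _ _ _ E') (@PsiSum _ _ _ _ _ _ _ E') !hK -E.
have C1 := @cocycle _ _ _ _ _ _ _ E' (l x) (h x); rewrite hK -E in C1.
have C2 := @cocycle _ _ _ _ _ _ _ E' (k x) (h (sS x)); rewrite hK in C2.
move: Hc C1 C2.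
set u := hinv (iter (k x) sT (h (sS x))).
set p := birkn sT l' (l x) (h x); set q := birkn sT k' (l x) (h x).
set r := birkn sT l' (k x) (h (sS x)); set s := birkn sT k' (k x) (h (sS x)).
move=> Hc C1 C2.
have H1 : birk sS g (1 + r)%N x = g x + birk sS g r (sS x) by rewrite birkD birk1.
have C3 : iter (1 + r)%N sS x = iter s sS u by rewrite addnC iterD.
case: (leqP (1 + r) p) => hp.
- have -> : p = (1 + r + (p - (1 + r)))%N by rewrite subnKC.
  have -> : q = (s + (p - (1 + r)))%N by lia.
  rewrite (birkD _ _ _ (1 + r)%N) (birkD _ _ _ s) H1 C3.
  lia.
- have E1 : (1 + r = p + (1 + r - p))%N by lia.
  have E2 : s = (q + (1 + r - p))%N by lia.
  move: H1; rewrite E1 E2 (birkD _ _ _ p) (birkD _ _ _ q) C1 => H1.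
  lia.
Qed.
Lemma shift_eq x :
  iter (birkn sT l' (l x) (h x) + birkn sT k' (k x) (h (sS x)))%N sS x =
  iter (birkn sT k' (l x) (h x) + 1 + birkn sT l' (k x) (h (sS x)))%N sS x.
Proof.
have C1 := @cocycle _ _ _ _ _ _ _ E' (l x) (h x); rewrite hK -E in C1.
have C2 := @cocycle _ _ _ _ _ _ _ E' (k x) (h (sS x)); rewrite hK in C2.
set p := birkn sT l' (l x) (h x); set q := birkn sT k' (l x) (h x).
set r := birkn sT l' (k x) (h (sS x)); set s := birkn sT k' (k x) (h (sS x)).
transitivity (iter s sS (iter p sS x)); first by rewrite -iterD addnC.
rewrite C1 iterC -C2 -iterSr -iterD; congr iter; lia.
Qed.
End Inv.

Section Top.
Variables (N : nat) (A : 'M[int]_N).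
Hypothesis A01 : zero_one_mx A.
Hypothesis Airr : irreducible_mx A.
Hypothesis Anp : ~~ is_perm_mx A.

Lemma pathP n i j : 0 < (A ^+ n) i j ->
  exists w : nat -> 'I_N, [/\ w 0%N = i, w n = j &
     forall t, (t < n)%N -> A (w t) (w t.+1) = 1].
Proof.
elim: n j => [|n IH] j.
  rewrite expr0 mxE; case: eqP => [->|] // _.
  by exists (fun _ => j); split.
rewrite exprSr -mulmxE mxE => Hs.
have [k Hk] : exists k, 0 < (A ^+ n) i k * A k j.
  case: (boolP [exists k, 0 < (A ^+ n) i k * A k j]) => [/existsP//|/existsPn Hn].
  exfalso; move: Hs; apply/negP; rewrite -leNgt.
  by apply: sumr_le0 => k _; rewrite leNgt Hn.
have Akj : A k j = 1.
  by case: (A01 k j) Hk => -> //; rewrite mulr0 ltxx.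
move: Hk; rewrite Akj mulr1 => /IH [w [w0 wn ws]].
exists (fun t => if (t <= n)%N then w t else j); split.
- by rewrite leq0n.
- by rewrite ltnn.
- move=> t; rewrite ltnS leq_eqVlt => /orP [/eqP ->|ht].
    by rewrite eqxx ltnn wn.
  by rewrite ht orbT; apply: ws.
Qed.

Lemma succ_ex i : exists j, A i j = 1.
Proof.
have [n [n0 /pathP [w [w0 wn ws]]]] := Airr i i.
by exists (w 1%N); rewrite -w0; apply: ws.
Qed.

Lemma pred_ex j : exists i, A i j = 1.
Proof.
have [n [n0 /pathP [w [w0 wn ws]]]] := Airr j j.
exists (w n.-1); have := ws n.-1; rewrite prednK // wn; apply.
exact: leqnn.
Qed.

Definition succ i := odflt i [pick j | A i j == 1].

Lemma succP i : A i (succ i) = 1.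
Proof.
rewrite /succ; case: pickP => [j /eqP //|H].
by have [j Hj] := succ_ex i; move: (H j); rewrite Hj eqxx.
Qed.

Lemma branch : exists b c1 c2, [/\ c1 != c2, A b c1 = 1 & A b c2 = 1].
Proof.
case: (boolP [exists b, exists c1, exists c2,
   [&& c1 != c2, A b c1 == 1 & A b c2 == 1]]).
  move=> /existsP [b /existsP [c1 /existsP [c2 /and3P [H1 /eqP H2 /eqP H3]]]].
  by exists b, c1, c2.
move=> Hn; exfalso; move/negP: Anp; apply.
have uniq b c : A b c = 1 -> c = succ b.
  move=> Hc; apply/eqP; apply/negPn/negP => Hne.
  move/negP: Hn; apply; apply/existsP; exists b; apply/existsP; exists c.
  apply/existsP; exists (succ b); rewrite Hne Hc succP eqxx //.
have sur j : exists i, succ i = j.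
  by have [i Hi] := pred_ex j; exists i; rewrite (uniq _ _ Hi).
pose g j := odflt j [pick i | succ i == j].
have gK : cancel g succ.
  move=> j; rewrite /g; case: pickP => [i /eqP //|H].
  by have [i Hi] := sur j; move: (H i); rewrite Hi eqxx.
have ginj : injective g := can_inj gK.
have [g' gg' g'g] := injF_bij ginj.
have si : injective succ.
  have e : succ =1 g'.
    by move=> y; rewrite -{1}(g'g y) gK.
  by move=> a b; rewrite !e; apply: (can_inj g'g).
apply/is_perm_mxP; exists (perm si); apply/matrixP => i j.
rewrite /perm_mx /row_perm !mxE permE.
case: eqP => [<-|ne]; first by rewrite succP.
by case: (A01 i j) => // /uniq E; exfalso; apply: ne.
Qed.

Lemma iter_shift_val e (x : XA A) i :
  proj1_sig (iter e (@shiftA N A) x) i = proj1_sig x (i + e)%N.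
Proof.
elim: e i => [|e IH] i; first by rewrite addn0.
by rewrite iterS /= IH addSnnS.
Qed.

Lemma nonisolated (x : XA A) K : exists (x' : XA A) J,
  [/\ (K <= J)%N, agree J x x' & proj1_sig x' J <> proj1_sig x J].
Proof.
have [b [c1 [c2 [c12 Hc1 Hc2]]]] := branch.
set X := proj1_sig x.
have HX : forall n, A (X n) (X n.+1) = 1 := proj2_sig x.
have [n [_ /pathP [w [w0 wn ws]]]] := Airr (X K) b.
have step : forall i, (i <= n)%N ->
   (exists t c, [/\ (K <= t)%N, A (X t) c = 1 & c <> X t.+1]) \/ w i = X (K + i)%N.
  elim=> [|i IH] hi; first by right; rewrite w0 addn0.
  case: (IH (ltnW hi)) => [//|Hw]; first by left.
  case: (eqVneq (w i.+1) (X (K + i.+1)%N)) => [|ne]; first by right.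
  left; exists (K + i)%N, (w i.+1); split; first exact: leq_addr.
  - by rewrite -Hw; apply: ws.
  - by rewrite -addnS; apply/eqP.
have [t [c [Kt Htc ne]]] : exists t c, [/\ (K <= t)%N, A (X t) c = 1 & c <> X t.+1].
  case: (step n (leqnn n)) => [//|]; rewrite wn => Hb.
  case: (eqVneq c1 (X (K + n).+1)) => [e1|ne1].
  - exists (K + n)%N, c2; split; first exact: leq_addr.
      by rewrite -Hb.
    by rewrite -e1 => e2; move: c12; rewrite e2 eqxx.
  - exists (K + n)%N, c1; split; first exact: leq_addr.
      by rewrite -Hb.
    by apply/eqP.
pose Y n := if (n <= t)%N then X n else iter (n - t.+1) succ c.
have HY : in_XA A Y.
  move=> m; rewrite /Y; case: (ltngtP m t) => hm.
  - exact: HX.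
  - by rewrite subSn // iterS succP.
  - by rewrite hm subSS subnn.
exists (exist _ Y HY), t.+1; split.
- exact: leqW.
- by move=> i hi; rewrite /= /Y -ltnS hi.
- by rewrite /= /Y ltnn subnn /=.
Qed.

Lemma noperiod (x : XA A) n0 e e' :
  (forall x', agree n0 x x' -> iter e (@shiftA N A) x' = iter e' (@shiftA N A) x') ->
  e = e'.
Proof.
wlog lt : e e' / (e <= e')%N.
  move=> W H; case: (leqP e e') => h; first by apply: W.
  by apply/esym; apply: W; [exact: ltnW| move=> x' /H ->].
move=> H; apply/eqP; rewrite eqn_leq lt /=; rewrite leqNgt; apply/negP => lt'.
have [x' [J [hJ ag ne]]] := nonisolated x (n0 + e')%N.
have Hx' := H x' (fun i hi => ag i (leq_trans hi (leq_trans (leq_addr _ _) hJ))).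
have Hx := H x (fun i _ => erefl).
have f1 := congr1 (fun z => proj1_sig z (J - e')%N) Hx'.
have f2 := congr1 (fun z => proj1_sig z (J - e')%N) Hx.
move: f1 f2; rewrite /= !iter_shift_val.
have j1 : (J - e' + e' = J)%N by rewrite subnK // (leq_trans (leq_addl _ _) hJ).
rewrite j1 => f1 f2; apply: ne; rewrite -f1.
rewrite -f2; apply: esym; apply: ag.
lia.
Qed.
End Top.
Set Implicit Arguments. Unset Strict Implicit.

Definition lc (N : nat) (A : 'M[int]_N) (T : Type) (F : XA A -> T) (x : XA A) :=
  exists n, forall x', agree n x x' -> F x' = F x.

Section Cont.
Variables (N M : nat) (A : 'M[int]_N) (B : 'M[int]_M).

Lemma agree_mono n m (x y : XA A) : (m <= n)%N -> agree n x y -> agree m x y.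
Proof. by move=> le H i hi; apply: H; apply: leq_trans le. Qed.

Lemma agree_iter n e (x y : XA A) :
  agree (n + e) x y -> agree n (iter e (@shiftA N A) x) (iter e (@shiftA N A) y).
Proof. by move=> H i hi; rewrite !iter_shift_val; apply: H; rewrite ltn_add2r. Qed.

Lemma lc_pair T1 T2 (F : XA A -> T1) (G : XA A -> T2) x :
  lc F x -> lc G x -> lc (fun y => (F y, G y)) x.
Proof.
move=> [n1 H1] [n2 H2]; exists (maxn n1 n2) => x' ag.
rewrite (H1 x') ?(H2 x') //; apply: agree_mono ag.
  exact: leq_maxr. exact: leq_maxl.
Qed.

Lemma lc_map T (h : XA A -> XA B) (G : XA B -> T) x :
  cont_map h -> lc G (h x) -> lc (fun y => G (h y)) x.
Proof.
move=> hc [n Hn]; have [m Hm] := hc x n.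
by exists m => x' ag; apply: Hn; apply: Hm.
Qed.

Lemma lc_iter T e (G : XA A -> T) x :
  lc G (iter e (@shiftA N A) x) -> lc (fun y => G (iter e (@shiftA N A) y)) x.
Proof.
move=> [n Hn]; exists (n + e)%N => x' ag; apply: Hn; exact: agree_iter.
Qed.

Lemma lc_dep T (a : XA A -> nat) (G : nat -> XA A -> T) x :
  lc a x -> lc (fun y => G (a x) y) x -> lc (fun y => G (a y) y) x.
Proof.
move=> [n1 H1] [n2 H2]; exists (maxn n1 n2) => x' ag.
rewrite (H1 x'); first by apply: H2; apply: agree_mono ag; exact: leq_maxr.
by apply: agree_mono ag; exact: leq_maxl.
Qed.

Lemma lc_birkn (u : XA A -> nat) a x :
  cont_disc u -> lc (birkn (@shiftA N A) u a) x.
Proof.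
move=> uc; elim: a => [|a IH].
  by exists 0%N => x' _; rewrite /birkn !big_ord0.
have H2 : lc (fun y => u (iter a (@shiftA N A) y)) x.
  by apply: lc_iter; apply: uc.
have [n Hn] := lc_pair IH H2.
exists n => x' ag; rewrite !birknS; by case: (Hn x' ag) => -> ->.
Qed.

Lemma lc_const T (c : T) x : lc (fun _ : XA A => c) x.
Proof. by exists 0%N. Qed.
End Cont.

Section Count.
Variables (N M : nat) (A : 'M[int]_N) (B : 'M[int]_M).
Hypothesis A01 : zero_one_mx A.
Hypothesis Airr : irreducible_mx A.
Hypothesis Anp : ~~ is_perm_mx A.
Variables (h : XA A -> XA B) (hinv : XA B -> XA A) (hK : cancel h hinv).
Hypothesis hc : cont_map h.
Variables (k l : XA A -> nat) (k' l' : XA B -> nat).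
Hypotheses (kc : cont_disc k) (lc' : cont_disc l) (k'c : cont_disc k') (l'c : cont_disc l').
Hypothesis E : forall x,
  iter (k x) (@shiftA M B) (h (shiftA x)) = iter (l x) (@shiftA M B) (h x).
Hypothesis E' : forall y,
  iter (k' y) (@shiftA N A) (hinv (shiftA y)) = iter (l' y) (@shiftA N A) (hinv y).

Lemma count_eq x :
  (birkn (@shiftA M B) l' (l x) (h x) + birkn (@shiftA M B) k' (k x) (h (shiftA x)) =
   birkn (@shiftA M B) k' (l x) (h x) + 1 + birkn (@shiftA M B) l' (k x) (h (shiftA x)))%N.
Proof.
pose sB := @shiftA M B.
pose P y := ((birkn sB l' (l y) (h y), birkn sB k' (l y) (h y)),
             (birkn sB l' (k y) (h (shiftA y)), birkn sB k' (k y) (h (shiftA y)))).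
have lP : lc P x.
  apply: lc_pair; apply: lc_pair.
  - apply: (lc_dep (G := fun a y => birkn sB l' a (h y))); first exact: lc'.
    by apply: lc_map => //; apply: lc_birkn.
  - apply: (lc_dep (G := fun a y => birkn sB k' a (h y))); first exact: lc'.
    by apply: lc_map => //; apply: lc_birkn.
  - apply: (lc_dep (G := fun a y => birkn sB l' a (h (shiftA y)))); first exact: kc.
    apply: (@lc_iter _ _ _ 1%N (fun z => birkn sB l' (k x) (h z))).
    by apply: lc_map => //; apply: lc_birkn.
  - apply: (lc_dep (G := fun a y => birkn sB k' a (h (shiftA y)))); first exact: kc.
    apply: (@lc_iter _ _ _ 1%N (fun z => birkn sB k' (k x) (h z))).
    by apply: lc_map => //; apply: lc_birkn.
have [n0 Hn] := lP.
apply: (@noperiod _ _ A01 Airr Anp x n0) => x' ag.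
have := @shift_eq _ _ _ _ _ _ _ E _ _ _ E' hK x'.
by case: (Hn x' ag) => -> -> -> ->.
Qed.
End Count.
Unset Implicit Arguments. Set Strict Implicit.
Theorem lemma4p5 (N M : nat) (A : 'M[int]_N) (B : 'M[int]_M)
  (HN : (1 < N)%N) (HM : (1 < M)%N)
  (A01 : zero_one_mx A) (B01 : zero_one_mx B)
  (Airr : irreducible_mx A) (Birr : irreducible_mx B)
  (Anp : ~~ is_perm_mx A) (Bnp : ~~ is_perm_mx B)
  (h : XA A -> XA B) (hinv : XA B -> XA A)
  (hK : cancel h hinv) (hinvK : cancel hinv h)
  (hc : cont_map h) (hinvc : cont_map hinv)
  (k1 l1 : XA A -> nat) (k2 l2 : XA B -> nat)
  (k1c : cont_disc k1) (l1c : cont_disc l1)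
  (k2c : cont_disc k2) (l2c : cont_disc l2)
  (E1 : forall x : XA A,
     iter (k1 x) (@shiftA M B) (h (shiftA x)) = iter (l1 x) (@shiftA M B) (h x))
  (E2 : forall y : XA B,
     iter (k2 y) (@shiftA N A) (hinv (shiftA y)) = iter (l2 y) (@shiftA N A) (hinv y)) :
  forall (m : nat) (f : XA B -> int) (g : XA A -> int),
    cont_disc f -> cont_disc g ->
    (forall x : XA A,
      birk (@shiftA N A) (Psi (@shiftA N A) (@shiftA M B) h k1 l1 f) m x
        = birk (@shiftA M B) f (birkn (@shiftA N A) l1 m x) (h x)
          - birk (@shiftA M B) f (birkn (@shiftA N A) k1 m x) (h (iter m (@shiftA N A) x))
      /\
      birk (@shiftA N A) g m x
        = birk (@shiftA M B) (Psi (@shiftA M B) (@shiftA N A) hinv k2 l2 g)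
            (birkn (@shiftA N A) l1 m x) (h x)
          - birk (@shiftA M B) (Psi (@shiftA M B) (@shiftA N A) hinv k2 l2 g)
            (birkn (@shiftA N A) k1 m x) (h (iter m (@shiftA N A) x)))
    /\
    (forall y : XA B,
      birk (@shiftA M B) (Psi (@shiftA M B) (@shiftA N A) hinv k2 l2 g) m y
        = birk (@shiftA N A) g (birkn (@shiftA M B) l2 m y) (hinv y)
          - birk (@shiftA N A) g (birkn (@shiftA M B) k2 m y) (hinv (iter m (@shiftA M B) y))
      /\
      birk (@shiftA M B) f m y
        = birk (@shiftA N A) (Psi (@shiftA N A) (@shiftA M B) h k1 l1 f)
            (birkn (@shiftA M B) l2 m y) (hinv y)
          - birk (@shiftA N A) (Psi (@shiftA N A) (@shiftA M B) h k1 l1 f)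
            (birkn (@shiftA M B) k2 m y) (hinv (iter m (@shiftA M B) y))).
Proof.
move=> m f g fc gc.
have Inv1 : forall g x, Psi (@shiftA N A) (@shiftA M B) h k1 l1
    (Psi (@shiftA M B) (@shiftA N A) hinv k2 l2 g) x = g x.
  move=> g' x; apply: (@PsiInv _ _ _ _ _ _ _ E1 _ _ _ E2 hK).
  exact: (count_eq A01 Airr Anp hK hc k1c l1c k2c l2c E1 E2).
have Inv2 : forall f y, Psi (@shiftA M B) (@shiftA N A) hinv k2 l2
    (Psi (@shiftA N A) (@shiftA M B) h k1 l1 f) y = f y.
  move=> f' y; apply: (@PsiInv _ _ _ _ _ _ _ E2 _ _ _ E1 hinvK).
  exact: (count_eq B01 Birr Bnp hinvK hinvc k2c l2c k1c l1c E2 E1).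
split=> [x|y]; split.
- exact: (@PsiSum _ _ _ _ _ _ _ E1).
- rewrite -(@PsiSum _ _ _ _ _ _ _ E1); apply: eq_bigr => i _; by rewrite Inv1.
- exact: (@PsiSum _ _ _ _ _ _ _ E2).
- rewrite -(@PsiSum _ _ _ _ _ _ _ E2); apply: eq_bigr => i _; by rewrite Inv2.
Qed.
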